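(* Let $L\ge 1$ and $0\le l<m\le L$. For all $\mathbf{i},\mathbf{a}\in B_l$, $\mathbf{j}\in B_m$ and $\mathbf{b}\in B_{m-l}$ one has \[ M(q,t)^{\mathbf{a},\mathbf{b}}_{\mathbf{i},\mathbf{j}} \;=\; S(q,t)^{\mathbf{a},\mathbf{b}}_{\mathbf{i},\mathbf{j}}, \] as formal power series in $q$ with coefficients in $\mathbb{Q}(t)$ (the left side being a rational function of $q,t$, expanded in $q$).
   Context: Notation: $B_l=\{\mathbf{i}=(i_1,\dots,i_L)\in\{0,1\}^L : i_1+\dots+i_L=l\}$; for $\mathbf{x},\mathbf{y}\in\{0,1\}^L$, $\mathbf{x}\le\mathbf{y}$ means $\mathbf{y}-\mathbf{x}\in\mathbb{Z}_{\ge0}^L$; columns are indexed by $\mathbb{Z}_L=\{1,\dots,L\}$ cyclically; $\theta(\text{true})=1,\theta(\text{false})=0$. Two-row pairing weights $M$. Picture $\mathbf{j}\in B_m$ as an upper row of $L$ boxes with a ball in column $k$ iff $j_k=1$, and $\mathbf{i}\in B_l$ as a lower row with a ball in column $k$ iff $i_k=1$. A pairing $\phi$ is an injection from the lower balls to the upper balls built as follows: the lower balls are processed from left to right (increasing column); when processing a lower ball in column $c$, the upper balls not yet chosen are called free; if the upper box in column $c$ holds a free ball, it must be chosen (trivial pairing, weight $1$); otherwise any free upper ball, say in column $c'\neq c$, may be chosen, with weight \[ \frac{(1-t)\,t^{s}\,q^{w}}{1-q\,t^{f}}, \] where $f$ is the number of free upper balls just before this choice, $s$ is the number of free upper balls in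 the columns $c'+1,c'+2,\dots,c-1$ (indices mod $L$, i.e. strictly between going cyclically leftwards from $c$ to $c'$), and $w=1$ if $c<c'$ (wrapping) and $w=0$ if $c'<c$. The weight of $\phi$ is the product of the weights of its $l$ choices. Define \[ M(q,t)^{\mathbf{a},\mathbf{b}}_{\mathbf{i},\mathbf{j}}=\theta(\mathbf{a}+\mathbf{b}=\mathbf{j})\sum_{\phi}\mathrm{wt}(\phi), \] the sum over pairings $\phi$ whose set of chosen upper balls is exactly the set of positions of $1$'s in $\mathbf{a}$. $t$-oscillators: $F=\bigoplus_{d\ge0}\mathbb{Q}(t)|d\rangle$ with $\mathbf{a}^+|d\rangle=|d+1\rangle$, $\mathbf{a}^-|d\rangle=(1-t^d)|d-1\rangle$ ($|-1\rangle=0$), $\mathbf{k}|d\rangle=t^d|d\rangle$, $q^{\mathbf{h}}|d\rangle=q^d|d\rangle$. Five-vertex weights $S^{ab}_{ij}$ ($i$ = left, $a$ = right, $j$ = bottom, $b$ = top edge, all in $\{0,1\}$), valued in operators on $F$: $S^{00}_{00}=1$, $S^{10}_{11}=1$, $S^{01}_{01}=\mathbf{k}$, $S^{10}_{01}=\mathbf{a}^-$, $S^{00}_{10}=\mathbf{a}^+$, and $S^{ab}_{ij}=0$ otherwise. Define \[ S(q,t)^{\mathbf{a},\mathbf{b}}_{\mathbf{i},\mathbf{j}}=(1-q\,t^{m-l})\,\mathrm{tr}_F\bigl(q^{\mathbf{h}}S^{a_1b_1}_{i_1j_1}S^{a_2b_2}_{i_2j_2}\cdots S^{a_Lb_L}_{i_Lj_L}\bigr),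 \] where $\mathrm{tr}_F(A)=\sum_{d\ge0}\langle d|A|d\rangle$ is taken as a formal power series in $q$. *)

(* Defs.v *)
From mathcomp Require Import all_boot all_order all_algebra.
From mathcomp Require Import fraction.
Set Implicit Arguments. Unset Strict Implicit. Unset Printing Implicit Defensive.
Import Order.TTheory GRing.Theory Num.Theory.
Local Open Scope ring_scope.

Definition K : fieldType := {fraction {poly rat}}.
Definition tt_ : K := FracField.tofrac ('X : {poly rat}).

(* Formal power series in q over Q(t): coefficient sequences. *)
Definition series := nat -> K.
Definition ser1 : series := fun n => if n == 0%N then 1 else 0.
Definition sermul (f g : series) : series :=
  fun n => \sum_(k < n.+1) f k * g (n - k)%N.

(* 0/1 vectors of length L; columns 1..L are encoded as 'I_L (column k <-> k-1). *)
Definition vec (L : nat) := {ffun 'I_L -> bool}.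
Definition inB (L l : nat) (x : vec L) : bool := (\sum_(k : 'I_L) (x k : nat) == l)%N.
Definition sum_eq (L : nat) (a b j : vec L) : bool :=
  [forall k, ((a k : nat) + (b k : nat) == (j k : nat))%N].
Definition supp (L : nat) (x : vec L) : {set 'I_L} := [set k | x k].

Section Pairing.
Variables (L : nat) (i : vec L).

(* weight of choosing the free upper ball c' for the lower ball c, when the set of
   free upper balls is [free], expanded as a power series in q:
   (1-t) t^s q^w / (1 - q t^f) = (1-t) t^s \sum_{k>=0} q^(w+k) t^(f k). *)
Definition nfree (free : {set 'I_L}) : nat := #|free|.
Definition sgap (c c' : 'I_L) (free : {set 'I_L}) : nat :=
  #|[set x in free | (0 < (x + L - c') %% L < (c + L - c') %% L)%N]|.
Definition wrap (c c' : 'I_L) : nat := (c < c')%N.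
Definition wtser (c c' : 'I_L) (free : {set 'I_L}) : series :=
  fun n => if (wrap c c' <= n)%N
           then (1 - tt_) * tt_ ^+ (sgap c c' free)
                  * tt_ ^+ (nfree free * (n - wrap c c'))
           else 0.

(* sum of weights of all pairings, processing the lower balls in the columns [cols]
   (in order), with current set of free upper balls [free]; [chosen_ok] tests at the
   end whether the set of chosen upper balls is the prescribed one. *)
Fixpoint pairsum (cols : seq 'I_L) (free : {set 'I_L})
    (chosen_ok : {set 'I_L} -> bool) : series :=
  match cols with
  | [::] => if chosen_ok free then ser1 else (fun _ => 0)
  | c :: cs =>
      if ~~ i c then pairsum cs free chosen_ok
      else if c \in free then pairsum cs (free :\ c) chosen_ok
      else fun n => \sum_(c' in free | c' != c)
                      sermul (wtser c c' free) (pairsum cs (free :\ c') chosen_ok) n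
  end.
End Pairing.

Definition Mser (L : nat) (a b i j : vec L) : series :=
  fun n => if sum_eq a b j
           then pairsum i (enum 'I_L) (supp j)
                  (fun final_free => (supp j :\: final_free) == supp a) n
           else 0.

(* The t-oscillator Fock space F = \bigoplus_d Q(t)|d>, encoded as {poly K} with |d> = 'X^d. *)
Definition Fock := {poly K}.
Definition aplus (p : Fock) : Fock := p * 'X.
Definition aminus (p : Fock) : Fock := \poly_(d < size p) ((1 - tt_ ^+ d.+1) * p`_d.+1).
Definition kop (p : Fock) : Fock := \poly_(d < size p) (tt_ ^+ d * p`_d).

(* five-vertex weights S^{ab}_{ij} (i left, a right, j bottom, b top) *)
Definition Sop (a b i j : bool) : Fock -> Fock :=
  match a, b, i, j with
  | false, false, false, false => id
  | true, false, true, true => id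
  | false, true, false, true => kop
  | true, false, false, true => aminus
  | false, false, true, false => aplus
  | _, _, _, _ => fun _ => 0
  end.

Definition Sprod (L : nat) (a b i j : vec L) (p : Fock) : Fock :=
  foldr (fun k acc => Sop (a k) (b k) (i k) (j k) acc) p (enum 'I_L).

(* tr_F(q^h X) as power series: coefficient of q^d is <d|X|d> *)
Definition trser (L : nat) (a b i j : vec L) : series :=
  fun d => (Sprod a b i j ('X ^+ d))`_d.

(* S(q,t)^{a,b}_{i,j} = (1 - q t^(m-l)) tr_F(...) *)
Definition Sser (L l m : nat) (a b i j : vec L) : series :=
  fun n => trser a b i j n
           - (if n is n'.+1 then tt_ ^+ (m - l) * trser a b i j n' else 0).

(* Main.v *)
Require Import Defs.
From mathcomp Require Import all_boot all_order all_algebra.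
From mathcomp Require Import fraction ring zify.
Set Implicit Arguments. Unset Strict Implicit. Unset Printing Implicit Defensive.
Import Order.TTheory GRing.Theory Num.Theory.
Local Open Scope ring_scope.

Definition linop (f : Fock -> Fock) :=
  forall (c : K) (p q : Fock), f (c *: p + q) = c *: f p + f q.

Lemma linop0 f : linop f -> f 0 = 0.
Proof.
move=> H; have := H 1 0 0; rewrite !scale1r addr0 => E.
by apply: (@addrI _ (f 0)); rewrite addr0 -E.
Qed.

Lemma linopD f : linop f -> forall p q, f (p + q) = f p + f q.
Proof. by move=> H p q; have := H 1 p q; rewrite !scale1r. Qed.

Lemma linopZ f : linop f -> forall c p, f (c *: p) = c *: f p.
Proof. by move=> H c p; rewrite -[c *: p]addr0 H linop0 // addr0. Qed.

Lemma linop_sum f (I : Type) (r : seq I) (P : pred I) (F : I -> Fock) :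
  linop f -> f (\sum_(x <- r | P x) F x) = \sum_(x <- r | P x) f (F x).
Proof.
move=> H; elim: r => [|x r IH]; first by rewrite !big_nil linop0.
by rewrite !big_cons; case: (P x); rewrite ?linopD // IH.
Qed.

Lemma kop_coef p d : (kop p)`_d = tt_ ^+ d * p`_d.
Proof.
rewrite /kop coef_poly; case: ltnP => // H.
by rewrite nth_default // mulr0.
Qed.

Lemma aminus_coef p d : (aminus p)`_d = (1 - tt_ ^+ d.+1) * p`_d.+1.
Proof.
rewrite /aminus coef_poly; case: ltnP => // H.
by rewrite nth_default ?mulr0 // (leq_trans H).
Qed.

Lemma aplus_coef p d : (aplus p)`_d = if d is d'.+1 then p`_d' else 0.
Proof. by rewrite /aplus coefMX; case: d. Qed.

Lemma linop_aplus : linop aplus.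
Proof. by move=> c p q; rewrite /aplus mulrDl scalerAl. Qed.

Lemma linop_kop : linop kop.
Proof.
move=> c p q; apply/polyP=> d.
by rewrite !(kop_coef, coefD, coefZ); ring.
Qed.

Lemma linop_aminus : linop aminus.
Proof.
move=> c p q; apply/polyP=> d.
by rewrite !(aminus_coef, coefD, coefZ); ring.
Qed.

Lemma linop_id : linop id.
Proof. by []. Qed.

Lemma linop_zero : linop (fun _ => 0).
Proof. by move=> c p q; rewrite scaler0 addr0. Qed.

Lemma linop_Sop a b i j : linop (Sop a b i j).
Proof.
case: a; case: b; case: i; case: j;
  by [apply: linop_id|apply: linop_zero|apply: linop_aplus|apply: linop_kop|apply: linop_aminus].
Qed.

Lemma kop_aplus p : kop (aplus p) = tt_ *: aplus (kop p).
Proof.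
apply/polyP=> d; rewrite coefZ kop_coef !aplus_coef; case: d => [|d]; first by rewrite !mulr0.
by rewrite kop_coef exprS mulrA.
Qed.

Lemma aminus_aplus p : aminus (aplus p) = tt_ *: aplus (aminus p) + (1 - tt_) *: p.
Proof.
apply/polyP=> d; rewrite coefD !coefZ aminus_coef !aplus_coef; case: d => [|d].
  by rewrite mulr0 add0r expr1.
by rewrite aminus_coef exprS; ring.
Qed.

Definition ocomp (s : seq (Fock -> Fock)) (p : Fock) : Fock := foldr (fun f acc => f acc) p s.

Lemma ocomp_cat s1 s2 p : ocomp (s1 ++ s2) p = ocomp s1 (ocomp s2 p).
Proof. by rewrite /ocomp foldr_cat. Qed.

Fixpoint alllin (s : seq (Fock -> Fock)) : Prop :=
  if s is f :: s' then linop f /\ alllin s' else True.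

Lemma alllin_cat s1 s2 : alllin (s1 ++ s2) <-> alllin s1 /\ alllin s2.
Proof. elim: s1 => [|f s1 IH] /=; first by tauto. rewrite IH; tauto. Qed.

Lemma linop_ocomp s : alllin s -> linop (ocomp s).
Proof.
elim: s => [|f s IH] H c p q //=.
case: H => Hf Hs.
by rewrite IH // Hf.
Qed.


Section Move.
Variable L : nat.
Definition upd (f : 'I_L -> Fock -> Fock) (r : 'I_L) (g : Fock -> Fock) : 'I_L -> Fock -> Fock :=
  fun x => if x == r then g else f x.
Definition ltI (x y : 'I_L) : bool := (x < y)%N.
Lemma ltI_trans : transitive ltI.
Proof. by move=> x y z; rewrite /ltI; apply: ltn_trans. Qed.

Variables (f red : 'I_L -> Fock -> Fock) (fr st : pred 'I_L).
Hypothesis linf : forall x, linop (f x).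
Hypothesis comm : forall x p, f x (aplus p) =
  tt_ ^+ fr x *: aplus (f x p) + (if st x then (1 - tt_) *: red x p else 0).

Lemma move s Z W p : sorted ltI s -> alllin Z ->
  ocomp (Z ++ map f s ++ aplus :: W) p =
  tt_ ^+ count fr s *: ocomp (Z ++ aplus :: map f s ++ W) p
  + \sum_(r <- s | st r) ((1 - tt_) * tt_ ^+ count (fun x => fr x && ltI r x) s)
        *: ocomp (Z ++ map (upd f r (red r)) s ++ W) p.
Proof.
elim: s Z => [|x s IH] Z /= Hs HZ.
  by rewrite big_nil addr0 expr0 scale1r.
have Hs' : sorted ltI s := path_sorted Hs.
have Hx : all (ltI x) s := order_path_min ltI_trans Hs.
have HZ' : alllin (Z ++ [:: f x]) by apply/alllin_cat; split => //=.
have := IH (Z ++ [:: f x]) Hs' HZ'; rewrite -!catA /= => ->.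
have xns : x \notin s.
  by apply/negP => xs; move/allP: Hx => /(_ x xs); rewrite /ltI ltnn.
set M := map f s ++ W.
have E1 : ocomp (Z ++ f x :: aplus :: M) p = tt_ ^+ fr x *: ocomp (Z ++ aplus :: f x :: M) p
   + (if st x then (1 - tt_) *: ocomp (Z ++ red x :: M) p else 0).
  have LZ := linop_ocomp HZ.
  rewrite !ocomp_cat /= comm (linopD LZ) (linopZ LZ).
  by case: (st x); rewrite ?(linopZ LZ) ?(linop0 LZ).
rewrite E1 big_cons.
have -> : [seq upd f x (red x) i | i <- s] = map f s.
  apply/eq_in_map => y ys; rewrite /upd; case: eqP => // E.
  by move: xns; rewrite -E ys.
have -> : count (fun y => fr y && ltI x y) s = count fr s.
  by apply/eq_in_count => y ys; move/allP: Hx => /(_ y ys) ->; rewrite andbT.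
have ES : \sum_(r <- s | st r)
     ((1 - tt_) * tt_ ^+ count (fun x0 : 'I_L => fr x0 && ltI r x0) s) *:
     ocomp ((Z ++ [:: f x]) ++ [seq upd f r (red r) i | i <- s] ++ W) p =
  \sum_(j <- s | st j)
       ((1 - tt_) *
        tt_ ^+ (fr x && ltI j x + count (fun x0 : 'I_L => fr x0 && ltI j x0) s)) *:
       ocomp (Z ++ upd f j (red j) x :: [seq upd f j (red j) i | i <- s] ++ W) p.
  rewrite big_seq_cond [RHS]big_seq_cond; apply: eq_bigr => r /andP[rs _].
  have -> : ltI r x = false.
    by move/allP: Hx => /(_ r rs); rewrite /ltI => H; apply/negP => H'; move: (ltn_trans H H'); rewrite ltnn.
  rewrite andbF add0n /upd -catA /=.
  by have -> : (x == r) = false by apply/negP => /eqP E; move: xns; rewrite E rs.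
rewrite -ES /upd eqxx /ltI ltnn andbF add0n exprD scalerDr scalerA
  [_ * _ ^+ fr x]mulrC -!addrA.
congr (_ + _).
case: (st x); last by rewrite scaler0 add0r.
by congr (_ + _); rewrite scalerA mulrC.
Qed.
End Move.


Definition trl (s : seq (Fock -> Fock)) (n : nat) : K := (ocomp s 'X^n)`_n.

Lemma trl_cycle s n : trl (aplus :: s) n = if n is n'.+1 then trl (s ++ [:: aplus]) n' else 0.
Proof.
rewrite /trl /= aplus_coef; case: n => // n.
by rewrite ocomp_cat /= /aplus -exprSr.
Qed.

Section Split.
Variable L : nat.

Lemma sorted_enum : sorted (@ltI L) (enum 'I_L).
Proof.
have := iota_ltn_sorted 0 L; rewrite -val_enum_ord sorted_map.
by apply: sub_sorted => x y.
Qed.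

Lemma split_sorted (s : seq 'I_L) c : sorted (@ltI L) s -> c \in s ->
  s = filter (fun x : 'I_L => (x < c)%N) s ++ c :: filter (fun x : 'I_L => (c < x)%N) s.
Proof.
elim: s => [|x s IH] //= Hs.
have Hs' := path_sorted Hs.
have Hx : all (ltI x) s := order_path_min (@ltI_trans L) Hs.
rewrite inE; case: (c =P x) => [E _|ne cs].
  subst x; rewrite ltnn /=.
  have -> : filter (fun x0 : 'I_L => (x0 < c)%N) s = [::].
    rewrite -(filter_pred0 s); apply: eq_in_filter => y ys.
    move/allP: Hx => /(_ y ys); rewrite /ltI => H; apply/negP => H'.
    by move: (ltn_trans H H'); rewrite ltnn.
  rewrite /= -{1}(filter_predT s); congr (_ :: _); apply: eq_in_filter => y ys /=.
  by move/allP: Hx => /(_ y ys).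
have xc : (x < c)%N by move/allP: Hx => /(_ c cs).
rewrite xc /= ltnNge (ltnW xc) /=; congr (_ :: _).
exact: IH.
Qed.

Lemma card_count (P : pred 'I_L) : #|[set x | P x]| = count P (enum 'I_L).
Proof.
rewrite cardE size_filter enumT; apply: eq_count => x /=; exact: in_set.
Qed.

End Split.

Section TraceRec.
Variable L : nat.
Variables (f red : 'I_L -> Fock -> Fock) (fr st : pred 'I_L).
Hypothesis linf : forall x, linop (f x).
Hypothesis comm : forall x p, f x (aplus p) =
  tt_ ^+ fr x *: aplus (f x p) + (if st x then (1 - tt_) *: red x p else 0).

Fixpoint alllin_map (s : seq 'I_L) : alllin (map f s) :=
  match s with [::] => I | x :: s' => conj (linf x) (alllin_map s') end.

Lemma trace_rec s1 s2 n : sorted (@ltI L) s1 -> sorted (@ltI L) s2 ->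
  trl (map f s1 ++ aplus :: map f s2) n =
  \sum_(r <- s1 | st r) ((1 - tt_) * tt_ ^+ count (fun x => fr x && ltI r x) s1)
       * trl (map (upd f r (red r)) s1 ++ map f s2) n
  + (if n is n'.+1 then tt_ ^+ count fr s1 *
       (tt_ ^+ count fr s2 * trl (map f s1 ++ aplus :: map f s2) n'
       + \sum_(r <- s2 | st r) ((1 - tt_) * tt_ ^+ count (fun x => fr x && ltI r x) s2)
           * trl (map f s1 ++ map (upd f r (red r)) s2) n')
     else 0).
Proof.
move=> H1 H2; rewrite {1}/trl.
have := @move L f red fr st linf comm s1 [::] (map f s2) 'X^n H1 I.
rewrite /= => ->.
rewrite coefD coefZ coef_sum addrC; congr (_ + _).
  by apply: eq_bigr => r _; rewrite coefZ.
have := trl_cycle (map f s1 ++ map f s2) n; rewrite /trl /= => ->.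
case: n => [|n]; first by rewrite mulr0.
rewrite -catA /=.
have := @move L f red fr st linf comm s2 (map f s1) [::] 'X^n H2 (alllin_map s1).
rewrite !cats0 => ->.
rewrite coefD coefZ coef_sum; congr (_ * (_ + _)).
by apply: eq_bigr => r _; rewrite coefZ cats0.
Qed.
End TraceRec.


Definition shiftm (g : K) (X : series) : series :=
  fun n => if n is n'.+1 then g * X n' else 0.

Lemma sermul_shift (W D X : series) (g : K) :
  (forall k, W k = D k + shiftm g W k) ->
  forall n, sermul W X n = sermul D X n + shiftm g (sermul W X) n.
Proof.
move=> HW n; rewrite /sermul.
under eq_bigr => k _ do rewrite HW mulrDl.
rewrite big_split /=; congr (_ + _).
case: n => [|n]; first by rewrite big_ord1 /= mul0r.
rewrite big_ord_recl /= mul0r add0r mulr_sumr; apply: eq_bigr => k _.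
by rewrite /bump /= add1n subSS mulrA.
Qed.

Lemma sermul_shiftR (W X : series) (g : K) n :
  sermul W (fun k => X k - shiftm g X k) n = sermul W X n - shiftm g (sermul W X) n.
Proof.
rewrite /sermul; under eq_bigr => k _ do rewrite mulrBr.
rewrite sumrB; congr (_ - _).
case: n => [|n].
  by rewrite big_ord1 /= mulr0.
rewrite big_ord_recr /= subnn /= mulr0 addr0 /= mulr_sumr; apply: eq_bigr => k _.
have -> : (n.+1 - k = (n - k).+1)%N by rewrite subSn // -ltnS.
by rewrite /= mulrCA.
Qed.

Lemma conv_rec (I : finType) (P : pred I) (W D T' : I -> series) (g : K) (T : series) :
  (forall r k, W r k = D r k + shiftm g (W r) k) ->
  (forall n, T n = \sum_(r | P r) sermul (D r) (T' r) n + shiftm g T n) ->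
  forall n, T n = \sum_(r | P r) sermul (W r) (T' r) n.
Proof.
move=> HW HT; elim/ltn_ind => n IH.
rewrite HT.
under [RHS]eq_bigr => r _ do rewrite (@sermul_shift (W r) (D r) (T' r) g (HW r)).
rewrite big_split /=; congr (_ + _).
case: n IH => [|n] IH /=; first by rewrite big1.
by rewrite IH // mulr_sumr.
Qed.

Definition delta (w : nat) (c : K) : series := fun k => if k == w then c else 0.

Lemma sermul_delta w c X n :
  sermul (delta w c) X n = if (w <= n)%N then c * X (n - w)%N else 0.
Proof.
rewrite /sermul /delta; case: leqP => H.
  have wl : (w < n.+1)%N by rewrite ltnS.
  rewrite (bigD1 (Ordinal wl)) //= eqxx big1 ?addr0 // => k nk.
  case: eqP => [E|_]; last by rewrite mul0r.
  move: nk; have -> : k = Ordinal wl by apply: val_inj.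
  by rewrite eqxx.
rewrite big1 // => k _; case: eqP => [E|_]; last by rewrite mul0r.
by move: (ltn_ord k); rewrite E ltnS leqNgt H.
Qed.

Lemma wtser_rec L (c c' : 'I_L) F k :
  wtser c c' F k = delta (Defs.wrap c c') ((1 - tt_) * tt_ ^+ sgap c c' F) k
    + shiftm (tt_ ^+ nfree F) (wtser c c' F) k.
Proof.
rewrite /wtser /delta /shiftm /Defs.wrap; case: (c < c')%N => /=.
  case: k => [|[|k]] //=; first by rewrite addr0.
    by rewrite /= mulr0 addr0 subnn muln0 expr0 mulr1.
  rewrite add0r mulnS exprD subSS subn0; ring.
case: k => [|k] /=; first by rewrite muln0 expr0 mulr1 addr0.
by rewrite add0r !subn0 mulnS exprD; ring.
Qed.


Lemma Sop_comm (A B I J : bool) p : (A + B = J)%N ->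
  Sop A B I J (aplus p) = tt_ ^+ J *: aplus (Sop A B I J p)
     + (if A then (1 - tt_) *: Sop false false I false p else 0).
Proof.
case: A; case: B; case: I; case: J => //= _;
  rewrite ?expr0 ?expr1 ?scale1r ?addr0 //.
- by rewrite -scalerDl addrC subrK scale1r.
- by rewrite aminus_aplus.
- by rewrite /aplus mul0r scaler0.
- by rewrite kop_aplus.
Qed.

Lemma modL (x r L : nat) : (x < L)%N -> (r < L)%N ->
  ((x + L - r) %% L = if (r <= x)%N then x - r else x + L - r)%N.
Proof.
move=> hx hr; case: leqP => h.
  have -> : (x + L - r = (x - r) + L)%N by lia.
  by rewrite modnDr modn_small //; lia.
by rewrite modn_small //; lia.
Qed.

Section Config.
Variables (L : nat) (a b i j : vec L).
Hypothesis hab : forall x, (a x + b x = j x)%N.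

Lemma ab_excl x : a x -> b x = false.
Proof. by move=> ax; have := hab x; rewrite ax; case: (b x); case: (j x). Qed.

Definition colop (cs : seq 'I_L) (F : {set 'I_L}) (x : 'I_L) : Fock -> Fock :=
  Sop (a x && (x \in F)) (b x) (i x && (x \in cs)) (x \in F).

Definition Tcs cs F n := trl (map (colop cs F) (enum 'I_L)) n.

Definition redop (cs : seq 'I_L) (x : 'I_L) : Fock -> Fock :=
  Sop false false (i x && (x \in cs)) false.

Variables (F : {set 'I_L}) (c : 'I_L) (cs : seq 'I_L).
Hypothesis Fsub : forall x, x \in F -> j x.
Hypothesis bsub : forall x, b x -> x \in F.
Hypothesis cF : c \notin F.
Hypothesis ic : i c.
Hypothesis srt : sorted (@ltI L) (c :: cs).

Lemma colop_comm x p : colop (c :: cs) F x (aplus p) =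
  tt_ ^+ (x \in F) *: aplus (colop (c :: cs) F x p)
  + (if a x && (x \in F) then (1 - tt_) *: redop cs x p else 0).
Proof.
rewrite /colop Sop_comm; last first.
  case xF: (x \in F); first by rewrite andbT hab Fsub.
  by rewrite andbF; case bx: (b x) => //; move: (bsub bx); rewrite xF.
case axF: (a x && (x \in F)) => //.
have xc : x != c by apply/eqP => E; move: axF cF; rewrite E => /andP[_ ->].
by rewrite /redop inE (negbTE xc).
Qed.


Let s1 := filter (fun x : 'I_L => (x < c)%N) (enum 'I_L).
Let s2 := filter (fun x : 'I_L => (c < x)%N) (enum 'I_L).
Lemma enum_split : enum 'I_L = s1 ++ c :: s2.
Proof. by apply: split_sorted; [apply: sorted_enum | rewrite mem_enum]. Qed.

Lemma bc : b c = false.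
Proof. by case bc: (b c) => //; move: (bsub bc); rewrite (negbTE cF). Qed.

Lemma cncs : c \notin cs.
Proof.
apply/negP => ccs; have := order_path_min (@ltI_trans L) srt.
by move/allP => /(_ c ccs); rewrite /ltI ltnn.
Qed.

Lemma s1P x : x \in s1 -> (x < c)%N.
Proof. by rewrite mem_filter => /andP[]. Qed.
Lemma s2P x : x \in s2 -> (c < x)%N.
Proof. by rewrite mem_filter => /andP[]. Qed.

Lemma colop_red r x : a r && (r \in F) -> x != c ->
  colop cs (F :\ r) x = upd (colop (c :: cs) F) r (redop cs r) x.
Proof.
move=> /andP[ar rF] xc; rewrite /upd /colop /redop.
case: eqP => [->|/eqP xr].
  by rewrite in_setD1 eqxx /= andbF (ab_excl ar).
by rewrite in_setD1 xr inE (negbTE xc).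
Qed.

Lemma colop_red_c r : colop cs (F :\ r) c = id.
Proof. by rewrite /colop in_setD1 (negbTE cF) !andbF bc (negbTE cncs) andbF. Qed.

Lemma Tcs_red r m : a r && (r \in F) ->
  Tcs cs (F :\ r) m = trl (map (upd (colop (c :: cs) F) r (redop cs r)) s1
                         ++ map (upd (colop (c :: cs) F) r (redop cs r)) s2) m.
Proof.
move=> Pr; rewrite /Tcs enum_split map_cat /= colop_red_c.
have -> : map (colop cs (F :\ r)) s1 = map (upd (colop (c :: cs) F) r (redop cs r)) s1.
  apply/eq_in_map => x /s1P xc; apply: colop_red => //.
  by apply/eqP => E; move: xc; rewrite E ltnn.
have -> : map (colop cs (F :\ r)) s2 = map (upd (colop (c :: cs) F) r (redop cs r)) s2.
  apply/eq_in_map => x /s2P xc; apply: colop_red => //.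
  by apply/eqP => E; move: xc; rewrite E ltnn.
by rewrite /trl !ocomp_cat.
Qed.

Lemma upd_notin (f : 'I_L -> Fock -> Fock) r g (s : seq 'I_L) : r \notin s -> map (upd f r g) s = map f s.
Proof.
move=> rs; apply/eq_in_map => x xs; rewrite /upd; case: eqP => // E.
by move: rs; rewrite -E xs.
Qed.

Lemma nfree_split : nfree F = (count (mem F) s1 + count (mem F) s2)%N.
Proof.
rewrite /nfree cardE size_filter -enumT enum_split count_cat /= (negbTE cF).
by [].
Qed.

Lemma sgap_s1 r : r \in s1 -> sgap c r F = count (fun x => (x \in F) && ltI r x) s1.
Proof.
move=> /s1P rc; rewrite /sgap card_count enum_split count_cat /= (negbTE cF) /=.
rewrite add0n [X in (_ + X)%N](_ : _ = 0%N) ?addn0.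
  apply: eq_in_count => x /s1P xc; congr (_ && _).
  rewrite !modL //; have := ltn_ord x; have := ltn_ord c; rewrite /ltI.
  by move=> *; case: (leqP r x) => h1; case: (leqP r c) => h2; apply/idP/idP; lia.
rewrite -(count_pred0 s2); apply: eq_in_count => x /s2P xc /=.
case: (x \in F) => //=; rewrite !modL //; have := ltn_ord x; have := ltn_ord c.
by move=> *; case: (leqP r x) => h1; case: (leqP r c) => h2; apply/idP/idP; lia.
Qed.

Lemma sgap_s2 r : r \in s2 ->
  sgap c r F = (count (mem F) s1 + count (fun x => (x \in F) && ltI r x) s2)%N.
Proof.
move=> /s2P rc; rewrite /sgap card_count enum_split count_cat /= (negbTE cF) /= add0n.
congr (_ + _)%N; apply: eq_in_count => x; [move=> /s1P xc|move=> /s2P xc]; rewrite /=;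
  case: (x \in F) => //=; rewrite !modL //; have := ltn_ord x; have := ltn_ord c; have := ltn_ord r;
  rewrite /ltI;
  by move=> *; case: (leqP r x) => h1; case: (leqP r c) => h2; apply/idP/idP; lia.
Qed.


Lemma Trec n : Tcs (c :: cs) F n =
  \sum_(r | a r && (r \in F))
     sermul (delta (Defs.wrap c r) ((1 - tt_) * tt_ ^+ sgap c r F)) (Tcs cs (F :\ r)) n
  + shiftm (tt_ ^+ nfree F) (Tcs (c :: cs) F) n.
Proof.
set f := colop (c :: cs) F.
set P := fun x => a x && (x \in F).
have linf : forall x, linop (f x) by move=> x; apply: linop_Sop.
have fc : f c = aplus by rewrite /f /colop (negbTE cF) andbF bc ic mem_head.
have Hs1 : sorted (@ltI L) s1 := sorted_filter (@ltI_trans L) _ (sorted_enum L).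
have Hs2 : sorted (@ltI L) s2 := sorted_filter (@ltI_trans L) _ (sorted_enum L).
have ET : forall m, Tcs (c :: cs) F m = trl (map f s1 ++ aplus :: map f s2) m.
  by move=> m; rewrite /Tcs enum_split map_cat /= -/f fc.
have key := @trace_rec L f (redop cs) (fun x => x \in F) P linf colop_comm s1 s2 n Hs1 Hs2.
have Esum : forall G : 'I_L -> K, \sum_(r | a r && (r \in F)) G r
    = \sum_(r <- enum 'I_L | a r && (r \in F)) G r by move=> G; rewrite big_enum_cond.
rewrite ET key Esum enum_split big_cat big_cons /=.
rewrite (negbTE cF) andbF -addrA; congr (_ + _).
  rewrite big_seq_cond [RHS]big_seq_cond; apply: eq_bigr => r /andP[rs1 Pr].
  have rc := s1P rs1.
  rewrite sermul_delta /Defs.wrap ltnNge (ltnW rc) /= subn0 Tcs_red // sgap_s1 //.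
  by rewrite (@upd_notin _ r _ s2) //; apply/negP => /s2P cr; move: (ltn_trans rc cr); rewrite ltnn.
case: n key => [|n] key /=.
  rewrite /shiftm addr0 big_seq_cond big1 // => r /andP[/s2P rc _].
  by rewrite sermul_delta /Defs.wrap rc.
rewrite ET mulrDr addrC mulrA -exprD -nfree_split; congr (_ + _).
rewrite mulr_sumr big_seq_cond [RHS]big_seq_cond; apply: eq_bigr => r /andP[rs2 Pr].
have rc := s2P rs2.
rewrite sermul_delta /Defs.wrap rc /= subn1 /= Tcs_red // sgap_s2 // exprD.
rewrite (@upd_notin _ r _ s1); last by apply/negP => /s1P cr; move: (ltn_trans rc cr); rewrite ltnn.
rewrite -/f; ring.
Qed.

End Config.


Lemma ocomp_map (L : nat) (g : 'I_L -> Fock -> Fock) s p :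
  ocomp (map g s) p = foldr (fun k acc => g k acc) p s.
Proof. by rewrite /ocomp foldr_map. Qed.

Lemma zero_col (L : nat) (g : 'I_L -> Fock -> Fock) x n :
  (forall y, linop (g y)) -> g x = (fun _ => 0) -> trl (map g (enum 'I_L)) n = 0.
Proof.
move=> lin gx.
rewrite /trl (split_sorted (sorted_enum L) (mem_enum _ x)) map_cat /= gx ocomp_cat /=.
by rewrite (linop0 (linop_ocomp (alllin_map lin _))) coef0.
Qed.

Lemma sermul0 (W : series) n : sermul W (fun _ => 0) n = 0.
Proof. by rewrite /sermul big1 // => k _; rewrite mulr0. Qed.

Lemma sermul_ext (W X Y : series) n : (forall k, X k = Y k) -> sermul W X n = sermul W Y n.
Proof. by move=> H; rewrite /sermul; apply: eq_bigr => k _; rewrite H. Qed.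

Lemma vanish (L : nat) (i : vec L) (ok : {set 'I_L} -> bool) cs : forall (F : {set 'I_L}),
  (forall F' : {set 'I_L}, F' \subset F -> ok F' = false) -> forall n, pairsum i cs F ok n = 0.
Proof.
elim: cs => [|c cs IH] F H n /=; first by rewrite H.
case: (i c) => /=; last exact: IH.
case: (c \in F).
  apply: IH => F' sF'; apply: H; apply: subset_trans sF' _; exact: subD1set.
rewrite big1 // => c' _; rewrite (@sermul_ext _ _ (fun _ => 0)) ?sermul0 //.
move=> k; apply: IH => F' sF'; apply: H; apply: subset_trans sF' _; exact: subD1set.
Qed.

Definition nonincr (f : Fock -> Fock) := forall p, (size (f p) <= size p)%N.

Lemma aminus_size p : (size (aminus p) <= (size p).-1)%N.
Proof.
apply/leq_sizeP => d hd; rewrite aminus_coef nth_default ?mulr0 //.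
by move: hd; case: (size p) => //= n; rewrite ltnS.
Qed.

Lemma kop_size : nonincr kop.
Proof.
move=> p; apply/leq_sizeP => d hd; by rewrite kop_coef nth_default ?mulr0.
Qed.

Lemma ocomp_nonincr (L : nat) (g : 'I_L -> Fock -> Fock) s :
  (forall y, nonincr (g y)) -> nonincr (ocomp (map g s)).
Proof.
move=> H; elim: s => [|x s IH] p //=.
exact: leq_trans (H x _) (IH p).
Qed.

Lemma col_aminus (L : nat) (g : 'I_L -> Fock -> Fock) x n :
  (forall y, nonincr (g y)) -> g x = aminus -> trl (map g (enum 'I_L)) n = 0.
Proof.
move=> ni gx.
rewrite /trl (split_sorted (sorted_enum L) (mem_enum _ x)) map_cat /= gx ocomp_cat /=.
apply: nth_default.
apply: leq_trans (@ocomp_nonincr L g _ ni _) _.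
apply: leq_trans (aminus_size _) _.
have := @ocomp_nonincr L g (filter (fun y : 'I_L => (x < y)%N) (enum 'I_L)) ni 'X^n.
by rewrite size_polyXn; case: (size _) => // k; rewrite ltnS.
Qed.

Lemma kop_Xn n : kop 'X^n = tt_ ^+ n *: 'X^n.
Proof.
apply/polyP => d; rewrite kop_coef coefZ coefXn.
by case: eqP => [->|]; rewrite ?mulr1 ?mulr0.
Qed.

Lemma ocomp_kop (L : nat) (g : 'I_L -> Fock -> Fock) (b : pred 'I_L) s n :
  (forall y, g y = if b y then kop else id) ->
  ocomp (map g s) 'X^n = tt_ ^+ (n * count b s) *: 'X^n.
Proof.
move=> H; elim: s => [|x s IH] /=; first by rewrite muln0 expr0 scale1r.
rewrite IH H; case: (b x) => /=; last by rewrite add0n.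
rewrite (linopZ linop_kop) kop_Xn scalerA -exprD; congr (_ ^+ _ *: _); lia.
Qed.

Section Main.
Variables (L : nat) (a b i j : vec L).
Hypothesis hab : forall x, (a x + b x = j x)%N.

Let e := count b (enum 'I_L).
Definition SG (cs : seq 'I_L) (F : {set 'I_L}) (n : nat) : K := Tcs a b i cs F n - shiftm (tt_ ^+ e) (Tcs a b i cs F) n.
Definition okj (F' : {set 'I_L}) := (supp j :\: F' == supp a).

Lemma colop_lin cs F y : linop (colop a b i cs F y).
Proof. exact: linop_Sop. Qed.

Lemma base (F : {set 'I_L}) : (forall x, x \in F -> j x) -> (forall x, b x -> x \in F) ->
  forall n, pairsum i [::] F okj n = SG [::] F n.
Proof.
move=> Fsub bsub n /=.
case: (boolP [exists x, a x && (x \in F)]) => [/existsP[x /andP[ax xF]]|/existsPn nex].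
  have -> : okj F = false.
    apply/negP => /eqP/setP/(_ x); rewrite !inE xF ax /=.
    by [].
  have T0 : forall m, Tcs a b i [::] F m = 0.
    move=> m; apply: (@col_aminus L _ x).
      move=> y p; rewrite /colop; case: (a y) (b y) (y \in F) => [] [] [] //=;
        rewrite ?andbF ?andbT /= ?kop_size //. all: try (apply: leq_trans (aminus_size _) (leq_pred _)). all: try by rewrite size_poly0.
    by rewrite /colop ax xF (ab_excl hab ax) in_nil andbF.
  by rewrite /SG /shiftm T0; case: n => [|n]; rewrite ?T0 ?mulr0 subr0.
have -> : okj F.
  apply/eqP/setP => x; rewrite !inE.
  case ax: (a x); case xF: (x \in F) => /=.
  - by move: (nex x); rewrite ax xF.
  - by have := hab x; rewrite ax; case: (j x).
  - by [].
  - have := hab x; rewrite ax; case bx: (b x) => /=; first by move: (bsub _ bx); rewrite xF.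
    by case: (j x).
have TK : forall m, Tcs a b i [::] F m = tt_ ^+ (m * e).
  move=> m; rewrite /Tcs /trl (@ocomp_kop L _ b) ?coefZ ?coefXn ?eqxx ?mulr1 //.
  move=> y; rewrite /colop in_nil andbF; case bx: (b y).
    by rewrite (bsub _ bx) andbT; case ay: (a y) => //; move: (ab_excl hab ay); rewrite bx.
  case yF: (y \in F); last by rewrite andbF.
  by move: (nex y) (hab y) (Fsub _ yF); rewrite yF bx andbT; case: (a y) (j y) => [] [].
rewrite /SG /shiftm /ser1 !TK; case: n => [|n] /=; first by rewrite mul0n expr0 subr0.
by rewrite TK -exprD mulSn subrr.
Qed.

Lemma okj_false (F F' : {set 'I_L}) r : F' \subset F :\ r -> j r -> a r = false -> okj F' = false.
Proof.
move=> sF jr ar; apply/negP => /eqP/setP/(_ r); rewrite !inE jr ar andbT.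
case rF: (r \in F') => //.
by move/subsetP: sF => /(_ r rF); rewrite !inE eqxx.
Qed.

Lemma ja x : a x -> j x.
Proof. by move=> ax; have := hab x; rewrite ax; case: (j x). Qed.

Lemma jb x : j x -> b x = false -> a x.
Proof. by move=> jx bx; have := hab x; rewrite jx bx; case: (a x). Qed.

Lemma mainl cs : sorted (@ltI L) cs -> forall (F : {set 'I_L}), (forall x, x \in F -> j x) ->
  (forall x, b x -> x \in F) -> forall n, pairsum i cs F okj n = SG cs F n.
Proof.
elim: cs => [|c cs IH] srt F Fsub bsub n; first exact: base.
have srt' : sorted (@ltI L) cs := path_sorted srt.
have cncs : c \notin cs.
  apply/negP => ccs; have := order_path_min (@ltI_trans L) srt.
  by move/allP => /(_ c ccs); rewrite /ltI ltnn.
rewrite /=.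
case ic: (i c) => /=; last first.
  rewrite IH // /SG /Tcs.
  have -> : map (colop a b i (c :: cs) F) (enum 'I_L) = map (colop a b i cs F) (enum 'I_L).
    apply: eq_map => x; rewrite /colop inE; case: eqP => [->|] //=.
    by rewrite ic (negbTE cncs).
  by [].
case cF: (c \in F).
  case bc: (b c).
    have ac : a c = false by case ac: (a c) => //; move: (ab_excl hab ac); rewrite bc.
    rewrite (@vanish L i okj); last by move=> F' sF'; apply: (okj_false sF') => //; apply: Fsub.
    have T0 : forall m, Tcs a b i (c :: cs) F m = 0.
      move=> m; apply: (@zero_col L _ c); first by move=> y; apply: linop_Sop.
      by rewrite /colop ac bc cF ic mem_head.
    by rewrite /SG /shiftm T0; case: n => [|n]; rewrite ?T0 ?mulr0 subr0.
  rewrite IH //; first last.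
  - move=> x bx; rewrite in_setD1 bsub // andbT; apply/eqP => E; move: bc; rewrite -E bx.
    by [].
  - by move=> x; rewrite in_setD1 => /andP[_ /Fsub].
  have ac : a c by apply: jb => //; apply: Fsub.
  rewrite /SG /Tcs.
  have -> : map (colop a b i (c :: cs) F) (enum 'I_L) = map (colop a b i cs (F :\ c)) (enum 'I_L).
    apply: eq_map => x; rewrite /colop in_setD1 inE; case: eqP => [->|] //=.
    by rewrite ac bc cF ic (negbTE cncs).
  by [].
have cF' : c \notin F by rewrite cF.
have HT := conv_rec (fun r k => wtser_rec c r F k) (Trec hab Fsub bsub cF' ic srt).
have HS : forall n, SG (c :: cs) F n =
    \sum_(r | a r && (r \in F)) sermul (fun k => wtser c r F k) (SG cs (F :\ r)) n.
  move=> m; rewrite /SG.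
  under eq_bigr => r _ do rewrite (sermul_shiftR (fun k => wtser c r F k) (Tcs a b i cs (F :\ r))).
  rewrite sumrB HT; congr (_ - _).
  rewrite /shiftm; case: m => [|m]; first by rewrite big1.
  by rewrite HT mulr_sumr.
rewrite HS (bigID a) /= [X in _ + X]big1 ?addr0.
  apply: eq_big => [r|r /andP[/andP[rF _] ar]].
    case rF: (r \in F) => /=; last by rewrite andbF.
    have -> : r != c by apply/eqP => E; move: cF; rewrite -E rF.
    by rewrite andbC.
  by apply: sermul_ext => k; apply: IH => // [x xr|x bx];
    [move: xr; rewrite in_setD1 => /andP[_ /Fsub]|
     rewrite in_setD1 bsub // andbT; apply/eqP => E; move: (ab_excl hab ar); rewrite -E bx].
move=> r /andP[/andP[rF _] ar].
rewrite (@sermul_ext _ _ (fun _ => 0)) ?sermul0 //.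
move=> k; rewrite (@vanish L i okj) // => F' sF'.
by apply: (okj_false sF'); [apply: Fsub | apply/negbTE].
Qed.

End Main.


Lemma sum_count L (b : vec L) : (\sum_(k : 'I_L) (b k : nat))%N = count b (enum 'I_L).
Proof.
rewrite -sum1_count big_enum_cond [RHS]big_mkcond /=; apply: eq_bigr => k _.
by case: (b k).
Qed.

Lemma trser_trl L (a b i j : vec L) n :
  trser a b i j n = trl (map (fun k => Sop (a k) (b k) (i k) (j k)) (enum 'I_L)) n.
Proof. by rewrite /trser /trl ocomp_map. Qed.

Lemma theorem4p1_aux (L l m : nat) (i a : vec L) (j : vec L) (b : vec L) :
  (1 <= L)%N -> (l < m)%N -> (m <= L)%N ->
  inB l i -> inB l a -> inB m j -> inB (m - l)%N b ->
  forall n : nat, Mser a b i j n = Sser l m a b i j n.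
Proof.
move=> _ _ _ _ _ _ Hb n.
rewrite /Mser.
case: (boolP (Defs.sum_eq a b j)) => [hs|hs].
  have hab : forall x, (a x + b x = j x)%N by move/forallP: hs => H x; apply/eqP/H.
  have Fsub : forall x, x \in supp j -> j x by move=> x; rewrite inE.
  have bsub : forall x, b x -> x \in supp j.
    by move=> x bx; rewrite inE; have := hab x; rewrite bx; case: (j x); rewrite ?addn1.
  have := @mainl L a b i j hab (enum 'I_L) (sorted_enum L) (supp j) Fsub bsub n.
  rewrite /okj => ->.
  have ET : forall k, Tcs a b i (enum 'I_L) (supp j) k = trser a b i j k.
    move=> k; rewrite trser_trl /Tcs; congr trl; apply: eq_map => x.
    rewrite /colop mem_enum andbT inE.
    by case ax: (a x) => //=; rewrite (ja hab ax).
  have he : count b (enum 'I_L) = (m - l)%N by rewrite -sum_count; apply/eqP.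
  rewrite /SG /Sser /shiftm he !ET.
  by case: n => [|n]; rewrite ?ET.
have [x hx] : exists x, (a x + b x != j x)%N.
  move: hs; rewrite /Defs.sum_eq => /forallPn[x hx]; by exists x.
have T0 : forall k, trser a b i j k = 0.
  move=> k; rewrite trser_trl; apply: (@zero_col L _ x).
    by move=> y; apply: linop_Sop.
  by move: hx; case: (a x); case: (b x); case: (i x); case: (j x).
by rewrite /Sser T0; case: n => [|n]; rewrite ?T0 ?mulr0 subr0.
Qed.


Local Close Scope ring_scope.
Unset Implicit Arguments.

Theorem theorem4p1 (L l m : nat) (i a : vec L) (j : vec L) (b : vec L) :
  (1 <= L)%N -> (l < m)%N -> (m <= L)%N ->
  inB l i -> inB l a -> inB m j -> inB (m - l) b ->
  forall n : nat, Mser a b i j n = Sser l m a b i j n.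
Proof. exact: theorem4p1_aux. Qed.
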